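(* Let $\mathcal{P}$ be a van Kampen diagram on a surface $\Sigma$ and let $P\in\mathcal{P}$ be a disk with vertex set $V_P$. Then $$-\kappa(P)\geq\frac{\beta(P)-6}{6}.$$
   Context: A van Kampen diagram on a compact surface $\Sigma$ over a presentation $\langle\mathcal{S}\mid\mathcal{R}\rangle$ is a decomposition of $\Sigma$ into finitely many labelled polygons (''disks'') whose boundaries read reduced elements of $\mathcal{R}^{\pm}$, with compatible labels on shared edges; by concatenating edges one assumes every vertex has degree at least $3$. For a disk $P$ with vertices $V_P$ and edges $E_P$: $\deg(v)$ is the number of edges adjacent to $v$, $\deg'(v)$ the number of disks adjacent to $v$, $\epsilon(e)\in\{1,2\}$ the number of disks adjacent to $e$; $\kappa(P)=\sum_{v\in V_P}\frac{1}{\deg'(v)}-\sum_{e\in E_P}\frac{1}{\epsilon(e)}+1$; $\beta(v)=1$ if $\deg(v)\geq3$ and $0$ otherwise; $\beta(P)=\sum_{v\in V_P}\beta(v)$. *)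

(* Defs.v *)
(* Combinatorial model of a van Kampen diagram on a compact
   surface, as a polygonal complex given by "sides" (edge occurrences on the
   boundaries of the disks), in the style of combinatorial maps. *)
From mathcomp Require Import all_boot all_order all_algebra perm.
Set Implicit Arguments. Unset Strict Implicit. Unset Printing Implicit Defensive.
Import Order.TTheory GRing.Theory Num.Theory.

(* V : vertices, E : (unoriented) edges, F : disks, S : sides, i.e. the
   occurrences of edges on the boundary polygons of the disks;
   G : generators of the presentation.
   - edge e goes from [src e] to [tgt e];
   - side s lies on the boundary of disk [face s], is an occurrence of edge
     [edge s], traversed along its orientation iff [orient s];
   - [next s] is the side following s along the boundary of its disk;
   - [lab e] is the generator labelling edge e (read along its orientation). *)
Record vk_data (V E F S : finType) (G : Type) := VKData {
  src : E -> V;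
  tgt : E -> V;
  face : S -> F;
  next : {perm S};
  edge : S -> E;
  orient : S -> bool;
  lab : E -> G
}.

Section VK.
Variables (V E F S : finType) (G : eqType) (D : vk_data V E F S G).

Local Notation src := (src D).
Local Notation tgt := (tgt D).
Local Notation face := (face D).
Local Notation next := (next D).
Local Notation edge := (edge D).
Local Notation orient := (orient D).
Local Notation lab := (lab D).

Definition stail (s : S) : V := if orient s then src (edge s) else tgt (edge s).
Definition shead (s : S) : V := if orient s then tgt (edge s) else src (edge s).

(* edge-ends: (e, true) is the tgt-end of e, (e, false) its src-end *)
Definition endpoint (x : E * bool) : V := if x.2 then tgt x.1 else src x.1.

(* The corner of the polygon [face s] located between side s and side next s
   is identified with s; it sits at vertex [shead s].  A corner has two slots:
   the in-slot (b = true), on the edge-end of side s, and the out-slot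
   (b = false), on the edge-end of side next s. *)
Definition slot_end (s : S) (b : bool) : E * bool :=
  if b then (edge s, orient s) else (edge (next s), ~~ orient (next s)).
Definition slot_occ (s : S) (b : bool) : S := if b then s else next s.

(* two corners are adjacent in the link of their vertex when they are glued
   along an edge-end, through two distinct occurrences of the edge *)
Definition link : rel S := fun s t =>
  [exists b1, exists b2,
     (slot_end s b1 == slot_end t b2) && (slot_occ s b1 != slot_occ t b2)].

(* deg v  : number of edges adjacent to v (edge-ends at v; loops count twice)
   deg' v : number of disks adjacent to v (corners at v, with multiplicity)
   eps e  : number of disks adjacent to e (occurrences of e, 1 or 2) *)
Definition deg (v : V) : nat := #|[set x : E * bool | endpoint x == v]|.
Definition deg' (v : V) : nat := #|[set s : S | shead s == v]|.
Definition eps (e : E) : nat := #|[set s : S | edge s == e]|.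

Definition letter_inv (x : G * bool) : G * bool := (x.1, ~~ x.2).
Definition word_inv (w : seq (G * bool)) := rev (map letter_inv w).
Definition freely_reduced (w : seq (G * bool)) :=
  sorted (fun x y => y != letter_inv x) w.

Definition bword (s : S) : seq (G * bool) :=
  [seq (lab (edge t), orient t) | t <- orbit next s].

Definition is_vk_diagram (R : seq (seq (G * bool))) : Prop :=
  (forall s, face (next s) = face s) /\
  (forall s t, face s = face t -> fconnect next s t) /\
  (forall f, exists s, face s = f) /\
  (forall s, stail (next s) = shead s) /\
  (* every edge lies on one or two disk sides (surface / boundary edges) *)
  (forall e, 1 <= eps e <= 2) /\
  (* the link of each vertex is connected (a path or a cycle): surface *)
  (forall s t, shead s = shead t -> connect link s t) /\
  (forall v, 3 <= deg v) /\
  (forall f, exists2 s, face s = f &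
     freely_reduced (bword s) && ((bword s \in R) || (word_inv (bword s) \in R))).

Local Open Scope ring_scope.

(* V_P = corners of P, E_P = sides of P *)
Definition kappa (P : F) : rat :=
  \sum_(s | face s == P) ((deg' (shead s))%:R)^-1
  - \sum_(s | face s == P) ((eps (edge s))%:R)^-1 + 1.

Definition beta (P : F) : nat :=
  \sum_(s | face s == P) (3 <= deg (shead s))%N.

End VK.

(* Main.v *)
Require Import Defs.
From mathcomp Require Import all_boot all_order all_algebra.
From mathcomp Require Import perm lra.
Import Order.TTheory GRing.Theory Num.Theory.
Local Open Scope ring_scope.

Lemma term_bound (a b d : nat) :
  (a == 1)%N || (a == 2)%N -> (b == 1)%N || (b == 2)%N -> (2 <= d)%N ->
  ((a == 2)%N && (b == 2)%N -> (3 <= d)%N) ->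
  1/6 <= (a%:R)^-1/2 + (b%:R)^-1/2 - (d%:R)^-1 :> rat.
Proof.
move=> ha hb hd h3.
have i2 : (d%:R)^-1 <= 2^-1 :> rat.
  rewrite lef_pV2 ?qualifE /= ?ler_nat ?ltr0n //; exact: ltnW hd.
case/orP: ha => /eqP ha; case/orP: hb => /eqP hb; subst a b => /=; rewrite ?invr1; try lra.
have i3 : (d%:R)^-1 <= 3^-1 :> rat.
  rewrite lef_pV2 ?qualifE /= ?ler_nat ?ltr0n ?(ltnW hd) ?(h3 isT) //.
lra.
Qed.

Section Comb.
Variables (V E F S : finType) (G : eqType) (D : vk_data V E F S G).
Hypothesis Hn : forall s, stail D (Defs.next D s) = shead D s.
Hypothesis Heps : forall e, (1 <= eps D e <= 2)%N.
Hypothesis Hlink : forall s t, shead D s = shead D t -> connect (link D) s t.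
Hypothesis Hdeg : forall v, (3 <= deg D v)%N.

Lemma endpoint_slot w b : endpoint D (slot_end D w b) = shead D w.
Proof.
case: b; rewrite /slot_end /endpoint /=; first by rewrite /shead; case: (orient D w).
rewrite -Hn /stail; by case: (orient D (Defs.next D w)).
Qed.

Lemma edge_occ w b : edge D (slot_occ D w b) = (slot_end D w b).1.
Proof. by case: b. Qed.

Lemma occ_slot x t : edge D t = x.1 ->
  exists w b, [/\ slot_end D w b = x, slot_occ D w b = t & shead D w = endpoint D x].
Proof.
move=> ht.
case: (boolP (orient D t == x.2)) => ho.
  exists t, true; split => //.
    by rewrite /slot_end ht (eqP ho); case: x {ht ho}.
  rewrite /shead /endpoint ht (eqP ho); by case: x {ht ho} => e [].
exists ((Defs.next D)^-1 t)%g, false; rewrite /slot_end /slot_occ permKV; split => //.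
  rewrite ht; case: x ht ho => e c /= _; by case: c; case: (orient D t).
rewrite -Hn permKV /stail /endpoint ht; case: x ht ho => e c /= _.
by case: c; case: (orient D t).
Qed.

Lemma surj x : exists w b, slot_end D w b = x /\ shead D w = endpoint D x.
Proof.
have : (0 < eps D x.1)%N by case/andP: (Heps x.1).
rewrite /eps card_gt0 => /set0Pn [t]; rewrite inE => /eqP ht.
have [w [b [h1 _ h3]]] := @occ_slot x t ht.
by exists w, b.
Qed.

Lemma ends_sub (v : V) (A : {set E * bool}) :
  (forall w b, shead D w = v -> slot_end D w b \in A) -> (deg D v <= #|A|)%N.
Proof.
move=> h; rewrite /deg; apply: subset_leq_card; apply/subsetP => x; rewrite inE => /eqP hx.
have [w [b [hwx _]]] := surj x.
by rewrite -hwx; apply: h; rewrite -hx -hwx endpoint_slot.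
Qed.

Lemma deg'_ge2 s : (2 <= deg' D (shead D s))%N.
Proof.
have : s \in [set t | shead D t == shead D s] by rewrite inE.
rewrite /deg'.
move=> hs; rewrite ltnNge; apply/negP => hle.
have h1 : #|[set t | shead D t == shead D s]| == 1%N.
  by rewrite eqn_leq hle card_gt0; apply/set0Pn; exists s.
case/cards1P: h1 => u hu.
have := Hdeg (shead D s).
suff : (deg D (shead D s) <= 2)%N by move=> a b; have := leq_trans b a.
apply: (@leq_trans #|[set slot_end D s true; slot_end D s false]|).
  apply: ends_sub => w b hw.
  have : w \in [set t | shead D t == shead D s] by rewrite inE hw.
  rewrite hu inE => /eqP ->.
  have : s \in [set u] by rewrite -hu.
  rewrite inE => /eqP <-.
  by case: b; rewrite !inE eqxx ?orbT.
by rewrite cards2; case: (_ != _).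
Qed.

Lemma other_occ s : eps D (edge D s) = 2%N ->
  exists t, t != s /\ edge D t = edge D s.
Proof.
rewrite /eps => /eqP /cards2P [a [b [hab hA]]].
have ha : a \in [set t | edge D t == edge D s] by rewrite hA !inE eqxx.
have hb : b \in [set t | edge D t == edge D s] by rewrite hA !inE eqxx orbT.
rewrite !inE in ha hb.
case: (eqVneq s a) => [esa|nsa].
  exists b; split; last exact/eqP.
  by rewrite esa eq_sym.
by exists a; split; [rewrite eq_sym | exact/eqP].
Qed.

Lemma three_in_two (T : finType) (a b x y z : T) :
  x \in [set a; b] -> y \in [set a; b] -> z \in [set a; b] -> y != z ->
  x = y \/ x = z.
Proof.
rewrite !inE => /orP [] /eqP -> /orP [] /eqP -> /orP [] /eqP ->.
all: rewrite ?eqxx //.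
all: try by left. all: try by right.
Qed.

Lemma connect_stuck (e : rel S) a u :
  (forall t, e a t -> t = a) -> connect e a u -> u = a.
Proof.
move=> H /connectP [p hp ->]; elim: p hp => //= c p IH /andP [h1 h2].
by have := H c h1 => ec; subst c; apply: IH.
Qed.

Lemma deg'_ge3 s : eps D (edge D s) = 2%N -> eps D (edge D (Defs.next D s)) = 2%N ->
  (3 <= deg' D (shead D s))%N.
Proof.
move=> he1 he2.
rewrite ltnNge; apply/negP => hle.
have h2 : #|[set t | shead D t == shead D s]| == 2%N.
  by rewrite eqn_leq hle deg'_ge2.
case/cards2P: h2 => p [q [hpq hC]].
have hp : shead D p = shead D s.
  have : p \in [set t | shead D t == shead D s] by rewrite hC !inE eqxx.
  by rewrite inE => /eqP.
have hq : shead D q = shead D s.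
  have : q \in [set t | shead D t == shead D s] by rewrite hC !inE eqxx orbT.
  by rewrite inE => /eqP.
have [u [nus hus hCu]] : exists u, [/\ u != s, shead D u = shead D s &
    forall w, shead D w = shead D s -> w = s \/ w = u].
  have : s \in [set t | shead D t == shead D s] by rewrite inE.
  rewrite hC !inE => /orP [] /eqP esp.
    exists q; split => //; first by rewrite esp eq_sym.
    move=> w hw; have : w \in [set t | shead D t == shead D s] by rewrite inE hw.
    by rewrite hC !inE => /orP [] /eqP ->; [left|right].
  exists p; split => //; first by rewrite esp.
  move=> w hw; have : w \in [set t | shead D t == shead D s] by rewrite inE hw.
  by rewrite hC !inE => /orP [] /eqP ->; [right|left].
clear p q hpq hC hp hq.
case: (eqVneq (slot_end D s true) (slot_end D s false)) => [ex|nx].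
  have nss : Defs.next D s != s.
    apply/eqP => ens; move: ex; rewrite /slot_end ens => /(congr1 snd) /=.
    by case: (orient D s).
  have hedge : edge D (Defs.next D s) = edge D s.
    by move: ex; rewrite /slot_end => /(congr1 fst) /= ->.
  have hocc : forall o, edge D o = edge D s -> o = s \/ o = Defs.next D s.
    move=> o ho; move: he1; rewrite /eps => /eqP /cards2P [a [b [hab hA]]].
    apply: (@three_in_two _ a b); [rewrite -hA inE ho // | rewrite -hA inE // |
       rewrite -hA inE hedge // | by rewrite eq_sym].
  have hst : forall t, link D s t -> t = s.
    move=> t /existsP [b1 /existsP [b2 /andP [/eqP he _]]].
    have e1 : slot_end D t b2 = slot_end D s true.
      by rewrite -he; case: b1 he => _ //; rewrite ex.
    have ht : shead D t = shead D s.
      by rewrite -(endpoint_slot t b2) e1 endpoint_slot.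
    clear he; case: (hCu t ht) => // etu; rewrite etu in e1.
    have ho : edge D (slot_occ D u b2) = edge D s by rewrite edge_occ e1.
    exfalso; case: (hocc _ ho) => eo; move: e1 eo ho; case: b2 => /= e1 eo _.
    - by rewrite eo eqxx in nus.
    - move: e1; rewrite /slot_end eo => /(congr1 snd) /=.
      by case: (orient D s).
    - move: e1 (congr1 snd ex); rewrite eo /slot_end => /(congr1 snd) /= ->.
      by case: (orient D s).
    - by move/perm_inj: eo => eo; rewrite eo eqxx in nus.
  have := @connect_stuck (link D) s u hst (Hlink s u (esym hus)).
  by move=> eus; rewrite eus eqxx in nus.
have [t1 [n1 e1]] := @other_occ s he1.
have [w1 [b1 [hw1 ho1 hs1]]] := @occ_slot (slot_end D s true) t1 e1.
rewrite endpoint_slot in hs1.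
have ew1 : w1 = u.
  case: (hCu w1 hs1) => // ew; subst w1; exfalso.
  move: hw1 ho1; case: b1 => hw1 ho1.
    by move: n1; rewrite -ho1 /= eqxx.
  by rewrite hw1 eqxx in nx.
have [t2 [n2 e2]] := @other_occ (Defs.next D s) he2.
have [w2 [b2 [hw2 ho2 hs2]]] := @occ_slot (slot_end D s false) t2 e2.
rewrite endpoint_slot in hs2.
have ew2 : w2 = u.
  case: (hCu w2 hs2) => // ew; subst w2; exfalso.
  move: hw2 ho2; case: b2 => hw2 ho2.
    by rewrite hw2 eqxx in nx.
  by move: n2; rewrite -ho2 /= eqxx.
subst w1 w2.
have nb : b1 != b2.
  apply/eqP => eb; subst b2; by rewrite -hw1 -hw2 eqxx in nx.
have := Hdeg (shead D s).
suff : (deg D (shead D s) <= 2)%N by move=> a b; have := leq_trans b a.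
apply: (@leq_trans #|[set slot_end D s true; slot_end D s false]|); last first.
  by rewrite cards2; case: (_ != _).
apply: ends_sub => w b hw.
case: (hCu w hw) => ->; first by case: b; rewrite !inE eqxx ?orbT.
have : b = b1 \/ b = b2 by move: nb; case: (b1); case: (b2); case: b; auto.
by case=> ->; rewrite ?hw1 ?hw2 !inE eqxx ?orbT.
Qed.

End Comb.

Theorem proposition4p5 (G : eqType) (R : seq (seq (G * bool)))
  (V E F S : finType) (D : vk_data V E F S G) (P : F) :
  is_vk_diagram D R ->
  - kappa D P >= ((beta D P)%:R - 6) / 6.
Proof.
move=> [Hf [Hconn [Hex [Hn [Heps [Hlink [Hdeg Hred]]]]]]].
rewrite /kappa.
set n := \sum_(s | face D s == P) (1 : rat).
have hb : (beta D P)%:R = n.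
  rewrite /beta natr_sum; apply: eq_bigr => s _; by rewrite Hdeg.
have hB : \sum_(s | face D s == P) ((eps D (edge D (Defs.next D s)))%:R)^-1
        = \sum_(s | face D s == P) ((eps D (edge D s))%:R)^-1 :> rat.
  rewrite [RHS](reindex_inj (@perm_inj _ (Defs.next D))) /=.
  by apply: eq_bigl => s; rewrite Hf.
have key : \sum_(s | face D s == P) (1/6 : rat) <=
  \sum_(s | face D s == P) (((eps D (edge D s))%:R)^-1/2
     + ((eps D (edge D (Defs.next D s)))%:R)^-1/2 - ((deg' D (shead D s))%:R)^-1).
  apply: ler_sum => s _; apply: term_bound.
  - by move: (Heps (edge D s)); case: (eps D (edge D s)) => [|[|[|k]]].
  - by move: (Heps (edge D (Defs.next D s))); case: (eps D _) => [|[|[|k]]].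
  - exact: (@deg'_ge2 _ _ _ _ _ D Hn Heps Hdeg).
  - by move/andP => [/eqP h1 /eqP h2]; apply: (@deg'_ge3 _ _ _ _ _ D Hn Heps Hlink Hdeg).
have hl : \sum_(s | face D s == P) (1/6 : rat) = n / 6.
  by rewrite /n mulr_suml; apply: eq_bigr => s _; rewrite mul1r.
rewrite hl sumrB big_split /= -!mulr_suml hB in key.
rewrite hb; lra.
Qed.
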